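(* For members $i\in\mathcal N$ with continuous-time dynamics $x'=f_i(x,u)$, $u\in U(x)$, and constraint set $K$, let $H=\bigcap_{i\in\mathcal N}\mathrm{Viab}_i(K)$ and let $\tilde U(x)=\bigcap_{i\in\mathcal N}\tilde U_i(x)$ for $x\in H$, where $\tilde U_i$ is member $i$'s viable regulation map on $\mathrm{Viab}_i(K)$. Then the condition $\mathrm{Dom}(\tilde U)=H$ is not sufficient for $H$ to be a viable set for all members: there exist such data with $\mathrm{Dom}(\tilde U)=H$ but $H$ not viable for some member.
   Context: $\mathrm{Viab}_i(K)$ is the viability kernel of $K$ for member $i$'s system: the set of $x\in K$ from which some evolution of $x'=f_i(x,u)$, $u\in U(x)$, stays in $K$ forever. A viable regulation map $\tilde U_i$ on $\mathrm{Viab}_i(K)$ associates to each state the admissible controls that are viable, i.e. controls $u\in U(x)$ under which the evolution can be kept in $\mathrm{Viab}_i(K)$ (all of $U(x)$ in the interior of the kernel). $\mathrm{Dom}(\tilde U)=\{x:\tilde U(x)\neq\emptyset\}$. A set $H$ is viable for a member if from every $x\in H$ some evolution of that member's system stays in $H$ forever. *)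

(* Defs.v *)
From HB Require Import structures.
From mathcomp Require Import all_boot all_order all_algebra.
From mathcomp Require Import all_classical all_reals all_analysis.
Set Implicit Arguments. Unset Strict Implicit. Unset Printing Implicit Defensive.
Import Order.TTheory GRing.Theory Num.Theory.
Import numFieldNormedType.Exports.
Local Open Scope classical_set_scope.
Local Open Scope ring_scope.

Section Viability.
Variables (R : realType) (V : normedModType R) (C : Type).

Definition is_evolution (f : V -> C -> V) (U : V -> set C) (x0 : V)
    (x : R -> V) : Prop :=
  x 0 = x0 /\
  {within [set t : R | 0 <= t], continuous x} /\
  exists u : R -> C, forall t : R, 0 < t ->
    is_derive t 1 x (f (x t) (u t)) /\ U (x t) (u t).

Definition viab_kernel (f : V -> C -> V) (U : V -> set C) (K : set V) : set V :=
  [set x0 | K x0 /\ exists x : R -> V, is_evolution f U x0 x /\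
                     forall t : R, 0 <= t -> K (x t)].

Definition viable_set (f : V -> C -> V) (U : V -> set C) (H : set V) : Prop :=
  forall x0, H x0 -> exists x : R -> V, is_evolution f U x0 x /\
                     forall t : R, 0 <= t -> H (x t).

(* Bouligand contingent cone: liminf_{h->0+} d(x + h v, D)/h = 0. *)
Definition contingent_cone (D : set V) (x : V) : set V :=
  [set v | forall e : R, 0 < e -> forall d : R, 0 < d ->
     exists h : R, 0 < h /\ h < d /\
       exists w : V, `|w - v| < e /\ D (x + h *: w)].

Definition regulation (f : V -> C -> V) (U : V -> set C) (K : set V)
    (x : V) : set C :=
  [set u | viab_kernel f U K x /\ U x u /\
           contingent_cone (viab_kernel f U K) x (f x u)].

Variable I : Type.

Definition common_kernel (f : I -> V -> C -> V) (U : V -> set C) (K : set V)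
  : set V := [set x | forall i, viab_kernel (f i) U K x].

Definition common_regulation (f : I -> V -> C -> V) (U : V -> set C)
    (K : set V) (x : V) : set C :=
  [set u | common_kernel f U K x /\ forall i, regulation (f i) U K x u].

End Viability.

Definition dom_sv {A B : Type} (F : A -> set B) : set A :=
  [set a | F a !=set0].

(* Main.v *)
Require Import Defs.
From HB Require Import structures.
From mathcomp Require Import all_boot all_order all_algebra.
From mathcomp Require Import all_classical all_reals all_analysis.
From mathcomp Require Import ring lra.
Import Order.TTheory GRing.Theory Num.Theory.
Import numFieldNormedType.Exports.
Local Open Scope classical_set_scope.
Local Open Scope ring_scope.

Section H.
Variable R : realType.

Lemma coord_closed (j : 'I_2) : closed [set v : 'rV[R]_2 | v ord0 j = 0].
Proof.
apply: (@preimage_closed _ _ (fun v : 'rV[R]_2 => v ord0 j) [set 0]).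
  by move=> v _; exact: coord_continuous.
exact: closed_eq.
Qed.

Lemma stay (x : R -> 'rV[R]_2) (t : R) (d : 'rV[R]_2) (j : 'I_2) : is_derive t (1:R) x d ->
  (\forall s \near t, x s ord0 j = 0) -> d ord0 j = 0.
Proof.
move=> [dx <-] /nbhs_ballP [e e0 He].
apply: (closed_cvg _ (coord_closed j) _ _ dx).
apply/nbhs_ballP; exists e => //= h hb hn.
rewrite /shift /= !mxE.
rewrite He ?He; first by rewrite subrr mulr0.
  exact: ballxx.
move: hb; rewrite /ball /= sub0r normrN => hb.
by rewrite -[h%:A]/(h * 1) mulr1 opprD addrCA subrr addr0 normrN.
Qed.

Lemma kern_sub (f : 'rV[R]_2 -> 'rV[R]_1 -> 'rV[R]_2) (U : 'rV[R]_2 -> set 'rV[R]_1)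
  (K : set 'rV[R]_2) (j k : 'I_2) (x0 : 'rV[R]_2) :
  (forall v u, f v u = delta_mx ord0 k) ->
  (forall v, K v -> v ord0 j = 0 \/ v ord0 k = 0) ->
  viab_kernel f U K x0 -> x0 ord0 j = 0.
Proof.
move=> hf hK [Kx0 [x [[x00 [xc [u hu]]] xK]]].
apply/eqP; apply: contraT => hne.
have Oo : open [set v : 'rV[R]_2 | v ord0 j != 0].
  rewrite (_ : [set v | _] = ~` [set v : 'rV[R]_2 | v ord0 j = 0]).
    exact/closed_openC/coord_closed.
  by apply/seteqP; split => v /= /eqP.
have A0 : [set t : R | 0 <= t] 0 by rewrite /= lexx.
have hc : x @ within [set t : R | 0 <= t] (nbhs 0) --> x 0.
  rewrite (nbhs_subspace_in A0); exact: (xc 0).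
rewrite x00 in hc.
have := hc _ (open_nbhs_nbhs (conj Oo hne)).
move=> /= /nbhs_ballP [e e0 He].
have e20 : 0 < e / 2 by rewrite divr_gt0.
have [hd _] := hu _ e20.
rewrite hf in hd.
suff : (delta_mx ord0 k : 'rV[R]_2) ord0 k = 0.
  by rewrite mxE !eqxx /= => /eqP; rewrite oner_eq0.
have := @stay x (e/2) _ k hd. apply.
apply/nbhs_ballP; exists (e / 2) => // s /=.
rewrite /ball /= ltr_distlC => /andP [h1 h2].
have s0 : 0 <= s by lra.
have := He s; rewrite /ball /= sub0r normrN ger0_norm //.
move=> /(_ _ s0) hs.
have {hs} hs := hs ltac:(lra).
by case: (hK _ (xK _ s0)) => // /eqP; rewrite (negPf hs).
Qed.

Lemma line_derive (a e : 'rV[R]_2) (t : R) :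
  is_derive t (1:R) (fun s : R => a + s *: e) e.
Proof.
have hq : \forall h \near (0:R)^',
    h^-1 *: (((fun s : R => a + s *: e) \o shift t) (h *: 1) - (a + t *: e)) = e.
  apply/nbhs_ballP; exists 1; first exact: ltr01.
  move=> h _ hn.
  rewrite /shift /= -[h%:A]/(h * 1) mulr1 scalerDl opprD.
  by rewrite addrACA subrr add0r addrK scalerA mulVf // scale1r.
split; first exact: (is_cvg_near_cst e hq).
exact: (lim_near_cst _ hq).
Qed.

Lemma line_cont (a e : 'rV[R]_2) :
  {within [set t : R | 0 <= t], continuous (fun s : R => a + s *: e)}.
Proof.
apply: continuous_subspaceT => s.
apply: cvgD; first exact: cvg_cst.
exact: scalel_continuous.
Qed.

Lemma kern_line (f : 'rV[R]_2 -> 'rV[R]_1 -> 'rV[R]_2) (U : 'rV[R]_2 -> set 'rV[R]_1)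
  (K : set 'rV[R]_2) (j k : 'I_2) (c : R) :
  (forall v u, f v u = delta_mx ord0 k) -> j != k -> (forall v u, U v u) ->
  (forall v : 'rV[R]_2, v ord0 j = 0 -> K v) ->
  viab_kernel f U K (c *: delta_mx ord0 k).
Proof.
move=> hf jk hU hK.
have ej : forall r : R, (r *: (delta_mx ord0 k : 'rV[R]_2)) ord0 j = 0.
  by move=> r; rewrite !mxE eqxx /= (negPf jk) mulr0.
split; first exact: hK.
exists (fun s => c *: delta_mx ord0 k + s *: delta_mx ord0 k); split.
  split; first by rewrite scale0r addr0.
  split; first exact: line_cont.
  exists (fun _ => 0) => t _; split; last exact: hU.
  rewrite hf; exact: line_derive.
move=> t _; apply: hK; rewrite -scalerDl; exact: ej.
Qed.
End H.

Theorem corollary1 (R : realType) :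
  exists (n m : nat) (I : finType)
         (f : I -> 'rV[R]_n -> 'rV[R]_m -> 'rV[R]_n)
         (U : 'rV[R]_n -> set 'rV[R]_m) (K : set 'rV[R]_n),
    [/\ closed K,
        (forall x, U x !=set0),
        (forall i, continuous (fun p : 'rV[R]_n * 'rV[R]_m => f i p.1 p.2)),
        dom_sv (common_regulation f U K) = common_kernel f U K &
        exists i : I, ~ viable_set (f i) U (common_kernel f U K)].
Proof.
pose f := fun (i : bool) (v : 'rV[R]_2) (u : 'rV[R]_1) =>
  if i then (delta_mx ord0 0 : 'rV[R]_2) else delta_mx ord0 1.
pose U := fun (_ : 'rV[R]_2) => [set: 'rV[R]_1].
pose K := [set v : 'rV[R]_2 | v ord0 1 = 0 \/ v ord0 0 = 0].
have n01 : (1 : 'I_2) != 0 by [].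
have Hz : forall x, common_kernel f U K x -> x = 0.
  move=> x hx.
  have h1 : x ord0 1 = 0.
    exact: (@kern_sub R (f true) U K 1 0 x (fun _ _ => erefl) (fun v hv => hv) (hx true)).
  have h0 : x ord0 0 = 0.
    apply: (@kern_sub R (f false) U K 0 1 x (fun _ _ => erefl) _ (hx false)).
    by move=> v [] ->; [right|left].
  apply/matrixP => a b; rewrite (ord1 a) mxE.
  have [->|->] : b = 0 \/ b = 1.
    case: b => [[|[|n]] hb]; [left|right|by []]; exact: val_inj.
  - exact: h0.
  - exact: h1.
have kl : forall (i : bool) c, viab_kernel (f i) U K (c *: delta_mx ord0 (if i then 0 else 1)).
  case=> c.
    exact: (@kern_line R (f true) U K 1 0 c (fun _ _ => erefl) n01 (fun _ _ => I) (fun v hv => or_introl hv)).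
  exact: (@kern_line R (f false) U K 0 1 c (fun _ _ => erefl) _ (fun _ _ => I) (fun v hv => or_intror hv)).
have H0 : common_kernel f U K 0.
  by move=> i; have := kl i 0; rewrite scale0r.
exists 2, 1, bool, f, U, K; split.
- exact: closedU (coord_closed R 1) (coord_closed R 0).
- by move=> x; exists 0.
- by case=> /=; exact: cst_continuous.
- apply/seteqP; split => x; first by case=> u [].
  move=> hx; have x0 := Hz x hx; subst x.
  exists 0; split => // i; split; first exact: hx.
  split => // e e0 d d0; exists (d / 2); split; first by rewrite divr_gt0.
  split; first by rewrite ltr_pdivrMr // ltr_pMr // ltr1n.
  exists (f i 0 0); split; first by rewrite subrr normr0.
  by rewrite add0r; case: i; [exact: (kl true) | exact: (kl false)].
- exists true => hv.
  have [x [[x00 [_ [u hu]]] xH]] := hv 0 H0.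
  have [hd _] := hu 1 ltr01.
  have := @stay R x 1 _ 0 hd.
  rewrite /f mxE !eqxx /= => h.
  have : (1 : R) = 0.
    apply: h; apply/nbhs_ballP; exists 1; first exact: ltr01.
    move=> s; rewrite /ball /= ltr_distlC => /andP [h1 h2].
    by rewrite (Hz _ (xH s ltac:(lra))) mxE.
  by move/eqP; rewrite oner_eq0.
Qed.
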